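(* Let $X\subseteq\mathbb{Z}_6^2$ and suppose there are distinct $a,b,c\in\mathbb{Z}_6$ such that $X$ contains at least $3$ elements with first coordinate $a$, at least $3$ elements with first coordinate $b$, and at least $4$ elements with first coordinate $c$. Then there exists $S\subseteq X$ with $|S|=6$ and $\sum_{s\in S}s=(0,0)$. *)

(* Defs.v *)
From mathcomp Require Import all_boot all_algebra.
Set Implicit Arguments. Unset Strict Implicit. Unset Printing Implicit Defensive.
Import GRing.Theory.
Local Open Scope ring_scope.

Definition Z6sq : finType := ('Z_6 * 'Z_6)%type.

Definition fiber (X : {set Z6sq}) (a : 'Z_6) : {set Z6sq} :=
  [set x in X | x.1 == a].

(* Main.v *)
Require Import Defs.
From mathcomp Require Import all_boot all_algebra.
Import GRing.Theory.
Local Open Scope ring_scope.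

Definition z6 : seq 'Z_6 := [seq inZp i | i <- iota 0 6].
Fixpoint allm (n : nat) : seq (seq bool) :=
  if n is n'.+1 then map (cons true) (allm n') ++ map (cons false) (allm n') else [:: [::]].
Definition lsum (s : seq 'Z_6) : 'Z_6 := foldr (fun x acc => x + acc) 0 s.
Definition sumsk (ys : seq 'Z_6) (k : nat) : seq 'Z_6 :=
  [seq lsum (mask m ys) | m <- allm (size ys) & count id m == k].
Definition tab (ys : seq 'Z_6) : seq (seq 'Z_6) := [seq sumsk ys k | k <- iota 0 5].
Definition Ys (k : nat) : seq (seq 'Z_6) := [seq mask m z6 | m <- allm 6 & count id m == k].
Definition pats : seq (nat * nat * nat) :=
  [seq p <- flatten [seq [seq (ka, kb, kc) | kb <- iota 0 4, kc <- iota 0 5] | ka <- iota 0 4]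
     | (p.1.1 + p.1.2 + p.2 == 6)%N].
Definition good (P : seq (nat*nat*nat)) (TA TB TC : seq (seq 'Z_6)) : bool :=
  has (fun p => has (fun x => has (fun y => - (x + y) \in nth [::] TC p.2) (nth [::] TB p.1.2))
     (nth [::] TA p.1.1)) P.
Definition TY3 := [seq tab ys | ys <- Ys 3].
Definition TY4 := [seq tab ys | ys <- Ys 4].
Definition coreP (P : seq (nat * nat * nat)) : bool :=
  all (fun TA => all (fun TB => all (fun TC => good P TA TB TC) TY4) TY3) TY3.
Definition patsOf (a b c : 'Z_6) := [seq p <- pats | a *+ p.1.1 + b *+ p.1.2 + c *+ p.2 == 0].
Definition PS := undup (flatten [seq flatten [seq [seq patsOf a b c | c <- z6 & (a != b) && (a != c) && (b != c)] | b <- z6] | a <- z6]).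
Definition allT := all (fun a => all (fun b => all (fun c => (a != b) && (a != c) && (b != c) ==> (patsOf a b c \in PS)) z6) z6) z6.

Lemma allT_ok : allT. Proof. by vm_compute. Qed.
Lemma coreP_ok : all coreP PS. Proof. by vm_compute. Qed.

Lemma mem_z6 (x : 'Z_6) : x \in z6.
Proof.
apply/mapP; exists (val x); last by rewrite valZpK.
by rewrite mem_iota add0n; exact: (ltn_ord x).
Qed.

Lemma uniq_z6 : uniq z6. Proof. by vm_compute. Qed.

Lemma allm_size n m : m \in allm n -> size m = n.
Proof.
elim: n m => [|n IH] m /=; first by rewrite inE => /eqP ->.
rewrite mem_cat => /orP[] /mapP[m' /IH <- ->] //.
Qed.

Lemma allm_complete n m : size m = n -> m \in allm n.
Proof.
elim: n m => [|n IH] [|b m] //= [Hm].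
rewrite mem_cat; case: b; apply/orP; [left|right]; apply/mapP; exists m => //; exact: IH.
Qed.

Lemma lsumE s : lsum s = \sum_(y <- s) y.
Proof. by elim: s => [|x s IH]; rewrite ?big_nil ?big_cons //= IH. Qed.

Lemma sumsk_spec ys k x : uniq ys -> x \in sumsk ys k ->
  exists Z : {set 'Z_6}, [/\ {subset Z <= ys}, #|Z| = k & \sum_(y in Z) y = x].
Proof.
move=> Uys /mapP[m]; rewrite mem_filter => /andP[/eqP cm /allm_size sm] ->.
have Um : uniq (mask m ys) by exact: mask_uniq.
exists [set y in mask m ys]; split.
- by move=> y; rewrite inE => /mem_mask.
- by rewrite cardsE (card_uniqP Um) size_mask.
- by rewrite lsumE (big_uniq _ Um); apply: eq_bigl => y; rewrite inE.
Qed.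

Lemma nth_tab ys k x : x \in nth [::] (tab ys) k -> x \in sumsk ys k.
Proof.
case: (ltnP k 5) => hk.
  by rewrite (nth_map 0%N) ?size_iota // nth_iota // add0n.
by rewrite nth_default ?size_map ?size_iota.
Qed.

Lemma ys_of (Y : {set 'Z_6}) k : #|Y| = k ->
  exists ys, [/\ uniq ys, ys =i Y & tab ys \in [seq tab ys | ys <- Ys k]].
Proof.
move=> cY; exists [seq y <- z6 | y \in Y]; split.
- exact: filter_uniq uniq_z6.
- by move=> y; rewrite mem_filter mem_z6 andbT.
apply: map_f; rewrite filter_mask; apply/mapP; exists [seq (y \in Y) | y <- z6] => //.
rewrite mem_filter allm_complete ?size_map // andbT count_map -size_filter.
rewrite -cY -(card_uniqP (filter_uniq _ uniq_z6)); apply/eqP/eq_card => y.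
by rewrite mem_filter mem_z6 andbT.
Qed.

Lemma core_sets (a b c : 'Z_6) (YA YB YC : {set 'Z_6}) :
  a != b -> a != c -> b != c -> #|YA| = 3%N -> #|YB| = 3%N -> #|YC| = 4%N ->
  exists ZA ZB ZC : {set 'Z_6}, [/\ [&& ZA \subset YA, ZB \subset YB & ZC \subset YC],
    (#|ZA| + #|ZB| + #|ZC| = 6)%N,
    a *+ #|ZA| + b *+ #|ZB| + c *+ #|ZC| = 0 &
    \sum_(y in ZA) y + \sum_(y in ZB) y + \sum_(y in ZC) y = 0].
Proof.
move=> ab ac bc cA cB cC.
have HP : patsOf a b c \in PS.
  by have := allT_ok; move=> /allP/(_ a (mem_z6 a))/allP/(_ b (mem_z6 b))/allP/(_ c (mem_z6 c));
  rewrite ab ac bc.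
have := allP coreP_ok _ HP.
have [ysA [uA eA tA]] := ys_of _ _ cA.
have [ysB [uB eB tB]] := ys_of _ _ cB.
have [ysC [uC eC tC]] := ys_of _ _ cC.
move=> /allP/(_ _ tA)/allP/(_ _ tB)/allP/(_ _ tC).
case/hasP => [[[ka kb] kc]]; rewrite mem_filter /= => /andP[/eqP Hk Hpat].
case/hasP => x /nth_tab /(sumsk_spec _ _ _ uA) [ZA [sA cZA sumA]].
case/hasP => y /nth_tab /(sumsk_spec _ _ _ uB) [ZB [sB cZB sumB]].
move=> /nth_tab /(sumsk_spec _ _ _ uC) [ZC [sC cZC sumC]].
exists ZA, ZB, ZC; split; first apply/and3P; first split.
- by apply/subsetP => z /sA; rewrite eA.
- by apply/subsetP => z /sB; rewrite eB.
- by apply/subsetP => z /sC; rewrite eC.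
- rewrite cZA cZB cZC; move: Hpat; rewrite mem_filter => /andP[/eqP ? _] //.
- by rewrite cZA cZB cZC.
- by rewrite sumA sumB sumC subrr.
Qed.

Lemma pick_sub (T : finType) (A : {set T}) k : (k <= #|A|)%N ->
  exists B : {set T}, B \subset A /\ #|B| = k.
Proof.
move=> hk; exists [set x in take k (enum A)]; split.
  by apply/subsetP => x; rewrite inE => /mem_take; rewrite mem_enum.
by rewrite cardsE (card_uniqP (take_uniq _ (enum_uniq _))) size_takel // -cardE.
Qed.

Lemma pair_sum (A : {set 'Z_6}) (F G : 'Z_6 -> 'Z_6) :
  \sum_(i in A) ((F i, G i) : 'Z_6 * 'Z_6) = (\sum_(i in A) F i, \sum_(i in A) G i).
Proof.
apply: (big_rec3 (fun (x : 'Z_6 * 'Z_6) y z => x = (y, z))) => // i x y z _ ->.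
by [].
Qed.

Lemma fiber_big (X : {set Z6sq}) (a : 'Z_6) :
  (#|fiber X a| <= #|[set y | ((a, y) : Z6sq) \in X]|)%N.
Proof.
apply: leq_trans (leq_imset_card (fun y => ((a, y) : Z6sq)) _).
apply: subset_leq_card; apply/subsetP => -[x1 x2]; rewrite inE => /andP[xX /= /eqP xa].
by apply/imsetP; exists x2; rewrite ?inE -?xa.
Qed.

Lemma sumU (A B : {set Z6sq}) (F : Z6sq -> 'Z_6 * 'Z_6) : [disjoint A & B] ->
  \sum_(p in A :|: B) F p = \sum_(p in A) F p + \sum_(p in B) F p.
Proof. by move=> d; rewrite -bigU //; apply: eq_bigl => p; rewrite inE. Qed.

Lemma cardU_dis (A B : {set Z6sq}) : [disjoint A & B] -> #|A :|: B| = (#|A| + #|B|)%N.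
Proof.
move=> d; rewrite -cardsUI.
have /eqP -> : A :&: B == set0 by rewrite setI_eq0.
by rewrite cards0 addn0.
Qed.

Theorem mainTheorem13 (X : {set Z6sq}) (a b c : 'Z_6) :
  a != b -> a != c -> b != c ->
  (3 <= #|fiber X a|)%N -> (3 <= #|fiber X b|)%N -> (4 <= #|fiber X c|)%N ->
  exists S : {set Z6sq}, [/\ S \subset X, #|S| = 6%N &
    \sum_(s in S) (s : 'Z_6 * 'Z_6) = 0].
Proof.
move=> ab ac bc ha hb hc.
have [YA [sYA cYA]] := pick_sub _ _ _ (leq_trans ha (fiber_big X a)).
have [YB [sYB cYB]] := pick_sub _ _ _ (leq_trans hb (fiber_big X b)).
have [YC [sYC cYC]] := pick_sub _ _ _ (leq_trans hc (fiber_big X c)).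
have [ZA [ZB [ZC [/and3P[sA sB sC] cZ Hfst Hsnd]]]] :=
  core_sets a b c YA YB YC ab ac bc cYA cYB cYC.
pose f (u : 'Z_6) := fun y : 'Z_6 => ((u, y) : Z6sq).
have finj u : injective (f u) by move=> y1 y2 [].
have disj u v (U V : {set 'Z_6}) : u != v -> [disjoint f u @: U & f v @: V].
  move=> uv; rewrite -setI_eq0; apply/eqP/setP => p; rewrite !inE.
  apply/negbTE/negP => /andP[/imsetP[y _ ->] /imsetP[z _ [e _]]].
  by rewrite e eqxx in uv.
have dAB := disj _ _ ZA ZB ab.
have dABC : [disjoint f a @: ZA :|: f b @: ZB & f c @: ZC].
  rewrite -setI_eq0; apply/eqP/setP => p; rewrite !inE.
  apply/negbTE/negP => /andP[/orP[] /imsetP[y _ ->] /imsetP[z _ [e _]]].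
    by rewrite e eqxx in ac.
  by rewrite e eqxx in bc.
have Hsum u (U : {set 'Z_6}) : \sum_(p in f u @: U) (p : 'Z_6 * 'Z_6) = (u *+ #|U|, \sum_(y in U) y).
  by rewrite big_imset /=; [rewrite pair_sum sumr_const | move=> ? ? _ _; apply: finj].
exists (f a @: ZA :|: f b @: ZB :|: f c @: ZC); split.
- apply/subsetP => p; rewrite !inE => /orP[/orP[]|] /imsetP[y yZ ->].
  + by have := subsetP sYA y (subsetP sA y yZ); rewrite inE.
  + by have := subsetP sYB y (subsetP sB y yZ); rewrite inE.
  + by have := subsetP sYC y (subsetP sC y yZ); rewrite inE.
- rewrite cardU_dis // cardU_dis // !card_imset //.
- rewrite sumU // sumU // !Hsum.
  have pE (x1 y1 x2 y2 : 'Z_6) : ((x1, y1) : 'Z_6 * 'Z_6) + (x2, y2) = (x1 + x2, y1 + y2) by [].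
  by rewrite !pE Hfst Hsnd.
Qed.
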